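(* For any $x>0$ with $x\neq 1$, \[ \sqrt{x}+\frac{4}{\ln^{2}x}\left(\frac{1}{8}(x-1)\ln x+\sqrt{x}-\frac{x+1}{2}\right)\le\frac{1+x}{2}. \] *)

(* Defs.v *)
From Stdlib Require Export Reals.

(* Main.v *)
Require Import Defs.
From Coquelicot Require Import Coquelicot.
From Stdlib Require Import Reals Lra.
Open Scope R_scope.

Lemma mono0 (f df : R -> R) (u : R) :
  (forall x, is_derive f x (df x)) -> (forall x, 0 <= x -> 0 <= df x) ->
  0 <= u -> f 0 <= f u.
Proof.
  intros Hd Hp Hu.
  destruct (MVT_gen f 0 u df) as [c [Hc He]].
  - intros; apply Hd.
  - intros x _. apply continuity_pt_filterlim. apply (ex_derive_continuous (V:=R_NormedModule)).
    eexists; apply Hd.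
  - rewrite Rmin_left in Hc by lra. rewrite Rmax_right in Hc by lra.
    assert (0 <= df c * (u - 0)) by (apply Rmult_le_pos; [apply Hp|]; lra).
    lra.
Qed.

Lemma sinh_ge (u : R) : 0 <= u -> 2 * u <= exp u - exp (- u).
Proof.
  intros Hu.
  pose (f := fun x => exp x - exp (- x) - 2 * x).
  assert (H := mono0 f (fun x => exp x + exp (-x) - 2) u).
  unfold f in H. rewrite Ropp_0, exp_0 in H.
  enough (0 <= exp u - exp (-u) - 2*u) by lra.
  assert (1 - 1 - 2*0 = 0) as E by ring. rewrite <- E. apply H; auto.
  - intros x. auto_derive; auto. ring.
  - intros x _. rewrite exp_Ropp.
    assert (0 < exp x) by apply exp_pos.
    assert (exp x * / exp x = 1) by (field; lra).
    assert (0 < / exp x) by (apply Rinv_0_lt_compat; lra).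
    assert (0 <= (exp x - 1)^2 * / exp x) by (apply Rmult_le_pos; [apply pow2_ge_0|lra]).
    nra.
Qed.

Definition F (u : R) := (u^2+1)*(exp u + exp (-u) - 2)/2 - u*(exp u - exp (-u))/4.

Lemma F_pos (u : R) : 0 <= u -> 0 <= F u.
Proof.
  intros Hu.
  assert (F 0 = 0) as E. { unfold F. rewrite Ropp_0, exp_0. field. }
  rewrite <- E. apply (mono0 F (fun u => (3*u/4)*(exp u + exp (-u)) - 2*u + u^2*(exp u - exp (-u))/2 + (exp u - exp (-u))/4)); auto.
  - intros x. unfold F. auto_derive; auto. field.
  - intros x Hx. pose proof (sinh_ge x Hx).
    rewrite exp_Ropp in *.
    assert (0 < exp x) by apply exp_pos.
    assert (exp x * / exp x = 1) by (field; lra).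
    assert (0 < / exp x) by (apply Rinv_0_lt_compat; lra).
    assert (0 <= (exp x - 1)^2 * / exp x) by (apply Rmult_le_pos; [apply pow2_ge_0|lra]).
    assert (2 <= exp x + / exp x) by nra.
    assert (0 <= x^2 * (exp x - / exp x)) by (apply Rmult_le_pos; [apply pow2_ge_0|lra]).
    nra.
Qed.

Lemma F_all (u : R) : 0 <= F u.
Proof.
  destruct (Rle_lt_dec 0 u). apply F_pos; auto.
  replace (F u) with (F (-u)). apply F_pos; lra.
  unfold F. rewrite Ropp_involutive. field.
Qed.

Theorem corollary2p4 (x : R) (hx : 0 < x) (hx1 : x <> 1) :
  sqrt x + 4 / (ln x ^ 2) * (1 / 8 * (x - 1) * ln x + sqrt x - (x + 1) / 2)
  <= (1 + x) / 2.
Proof.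
  set (u := ln x / 2).
  assert (Hs : sqrt x = exp u).
  { replace x with (exp u * exp u) at 1.
    apply sqrt_square. left; apply exp_pos.
    rewrite <- exp_plus. unfold u. replace (ln x / 2 + ln x / 2) with (ln x) by field.
    apply exp_ln; auto. }
  assert (Hx : x = exp u * exp u).
  { rewrite <- exp_plus. unfold u. replace (ln x / 2 + ln x / 2) with (ln x) by field.
    rewrite exp_ln; auto. }
  assert (HL : ln x = 2 * u) by (unfold u; field).
  assert (Hu : u <> 0).
  { intro H0. apply hx1. rewrite Hx, H0, exp_0. ring. }
  pose proof (F_all u) as HF. unfold F in HF. rewrite exp_Ropp in HF.
  rewrite Hs, HL. rewrite Hx at 1 2 3.
  set (s := exp u) in *.
  assert (0 < s) by apply exp_pos.
  assert (K : 0 <= (u^2+1)*(s-1)^2/2 - u*(s^2-1)/4).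
  { replace ((u^2+1)*(s-1)^2/2 - u*(s^2-1)/4) with
      (s * ((u ^ 2 + 1) * (s + / s - 2) / 2 - u * (s - / s) / 4)) by (field; lra).
    apply Rmult_le_pos; lra. }
  assert (0 < u^2) by (apply pow2_gt_0; auto).
  enough (0 <= (1 + s*s)/2 - (s + 4 / (2 * u) ^ 2 * (1 / 8 * (s * s - 1) * (2 * u) + s - (s * s + 1) / 2))) by lra.
  replace ((1 + s*s)/2 - (s + 4 / (2 * u) ^ 2 * (1 / 8 * (s * s - 1) * (2 * u) + s - (s * s + 1) / 2)))
    with (((u^2+1)*(s-1)^2/2 - u*(s^2-1)/4) / u^2) by (field; auto).
  apply Rdiv_le_0_compat; auto.
Qed.
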